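(* Let $n$ be a non-negative integer, let $(a_k)_{k\ge 1}$ be a sequence of complex numbers, and let $r$ be a complex number that is not a negative integer. Then $$\sum_{k = 1}^n \sum_{j = 0}^{k - 1} \frac{a_{n - j}}{k - j + r} = \sum_{k = 1}^n a_k H_{k + r} - H_r \sum_{k = 1}^n a_k.$$ In particular, $$\sum_{k = 1}^n \sum_{j = 0}^{k - 1} \frac{a_{n - j}}{k - j} = \sum_{k = 1}^n a_k H_k \qquad\text{and}\qquad \sum_{k = 1}^n \sum_{j = 0}^{k - 1} \frac{a_{n - j}}{2k - 2j - 1} = \sum_{k = 1}^n a_k O_k.$$
   Context: For a complex number $z$ that is not a negative integer, the harmonic number is $H_z=\sum_{m=1}^\infty\left(\frac1m-\frac1{m+z}\right)$ (so $H_0=0$ and $H_n=\sum_{m=1}^n \frac1m$ for non-negative integers $n$). The odd harmonic numbers are $O_n=\sum_{m=1}^n \frac{1}{2m-1}$. Empty sums are zero. *)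

(* Defs.v *)
From Stdlib Require Import Reals.
From Coquelicot Require Export Coquelicot.
Open Scope C_scope.

Definition harm_term (z : C) (m : nat) : C :=
  / RtoC (INR m) - / (RtoC (INR m) + z).

(* H_z = sum_{m>=1} (1/m - 1/(m+z)), the complex series summed via its
   real and imaginary parts (Coquelicot's Series is real-valued). Index
   m >= 1 is realised by shifting: term at index i is harm_term z (S i). *)
Definition H (z : C) : C :=
  (Series (fun i => Re (harm_term z (S i))),
   Series (fun i => Im (harm_term z (S i)))).

Definition O (n : nat) : C :=
  sum_n_m (fun m => / RtoC (2 * INR m - 1)) 1 n.

Definition neg_int (z : C) : Prop := exists m : nat, z = RtoC (- INR (S m)).

(* Main.v *)
From Stdlib Require Import Reals Lra Lia.
From Coquelicot Require Import Coquelicot.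
Require Import Defs.
Open Scope C_scope.

Lemma inner_step (b : nat -> C) (g : nat -> nat -> C)
  (Hg : forall k j, g (S k) (S j) = g k j) n k :
  sum_n_m (fun j => b (S n - j)%nat * g (S (S k)) j) 0 (S k)
  = b (S n) * g (S (S k)) 0%nat + sum_n_m (fun j => b (n - j)%nat * g (S k) j) 0 k.
Proof.
  rewrite sum_Sn_m; [|lia].
  rewrite <- sum_n_m_S.
  simpl (S n - 0)%nat.
  change plus with Cplus.
  f_equal.
  apply sum_n_m_ext => j. rewrite Hg. reflexivity.
Qed.

Lemma reindex (b : nat -> C) (g : nat -> nat -> C)
  (Hg : forall k j, g (S k) (S j) = g k j) n :
  sum_n_m (fun k => sum_n_m (fun j => b (n - j)%nat * g k j) 0 (k-1)) 1 n
  = sum_n_m (fun m => b m * sum_n_m (fun k => g k 0%nat) 1 m) 1 n.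
Proof.
  induction n as [|n IH].
  - rewrite !sum_n_m_zero; auto.
  - symmetry. rewrite sum_n_Sm; [|lia]. rewrite <- IH. symmetry.
    rewrite sum_Sn_m; [|lia].
    rewrite <- sum_n_m_S.
    rewrite (sum_n_m_ext_loc _ (fun k => plus (b (S n) * g (S k) 0%nat)
        (sum_n_m (fun j => b (n - j)%nat * g k j) 0 (k - 1))) 1 n).
    2:{ intros k Hk. destruct k as [|k]; [lia|].
        simpl (S (S k) - 1)%nat. simpl (S k - 1)%nat. rewrite Nat.sub_0_r.
        apply inner_step; auto. }
    rewrite sum_n_m_plus.
    rewrite (sum_Sn_m _ 1 (S n)); [|lia].
    rewrite <- (sum_n_m_S (fun k => g k 0%nat) 1 n).
    rewrite sum_n_n. simpl (S n - 0)%nat.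
    change (sum_n_m (fun k => b (S n) * g (S k) 0%nat) 1 n) with
      (sum_n_m (fun k => mult (b (S n)) (g (S k) 0%nat)) 1 n).
    rewrite sum_n_m_mult_l.
    change plus with Cplus. change mult with Cmult. simpl (1 - 1)%nat.
    rewrite Nat.sub_0_r. change (@sum_n_m (Ring.AbelianMonoid C_Ring)) with (@sum_n_m C_AbelianMonoid). match goal with |- ?x = ?y => change (@eq C x y) end. ring.
Qed.

Lemma Im_le_Cmod c : (Rabs (Im c) <= Cmod c)%R.
Proof.
  unfold Cmod. rewrite <- sqrt_Rsqr_abs. apply sqrt_le_1_alt.
  pose proof (Rle_0_sqr (Re c)). unfold Rsqr in *. unfold Re, Im in *. simpl. lra.
Qed.

Ltac fixeqR := match goal with |- ?x = ?y => change (@eq R x y) end.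

Lemma tele_sum N : sum_n (fun i => / INR (S i) - / INR (S (S i)))%R N = (1 - / INR (S (S N)))%R.
Proof.
  induction N as [|N IH].
  - rewrite sum_O. fixeqR. simpl. field.
  - rewrite sum_Sn, IH. change plus with Rplus. fixeqR.
    rewrite !S_INR. field. split; pose proof (pos_INR N); lra.
Qed.

Lemma tele : is_series (fun i => / INR (S i) - / INR (S (S i)))%R 1%R.
Proof.
  unfold is_series. change (is_lim_seq (sum_n (fun i => / INR (S i) - / INR (S (S i)))%R) 1%R).
  apply (is_lim_seq_ext (fun N => 1 - / INR (S (S N)))%R).
  { intro N. symmetry. apply tele_sum. }
  assert (HL : is_lim_seq (fun N => 1 - / INR (S (S N)))%R (1 - 0)%R).
  2:{ rewrite Rminus_0_r in HL. exact HL. }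
  apply is_lim_seq_minus'. apply is_lim_seq_const.
  replace (Finite 0) with (Rbar_inv p_infty) by reflexivity.
  apply is_lim_seq_inv; [|discriminate].
  apply (is_lim_seq_ext (fun n => INR (n + 2))). { intro n. f_equal. lia. }
  apply (is_lim_seq_incr_n INR 2). apply is_lim_seq_INR.
Qed.

Lemma harm_bound z (m : nat) : (2 * Cmod z <= INR m)%R -> (1 <= INR m)%R ->
  (Cmod (harm_term z m) <= 4 * Cmod z * (/ INR m - / (INR m + 1)))%R.
Proof.
  intros H1 H2.
  set (M := INR m) in *.
  assert (Hd : (M - Cmod z <= Cmod (RtoC M + z))%R).
  { assert (Cmod (RtoC M) <= Cmod (RtoC M + z) + Cmod (- z))%R.
    { replace (RtoC M) with ((RtoC M + z) + - z) at 1 by ring. apply Cmod_triangle. }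
    rewrite Cmod_opp, Cmod_R, Rabs_pos_eq in H; lra. }
  assert (Hw : RtoC M + z <> 0).
  { intro E. rewrite E, Cmod_0 in Hd. pose proof (Cmod_ge_0 z). lra. }
  assert (HM : RtoC M <> 0).
  { intro E. apply RtoC_inj in E. lra. }
  unfold harm_term. fold M.
  replace (/ RtoC M - / (RtoC M + z)) with (z * / (RtoC M * (RtoC M + z))) by (field; auto).
  rewrite Cmod_mult, Cmod_inv, Cmod_mult, Cmod_R, Rabs_pos_eq by (try lra; apply Cmult_neq_0; auto).
  replace (4 * Cmod z * (/ M - / (M + 1)))%R with (Cmod z * / (M * (M+1) / 4))%R by (field; lra).
  pose proof (Cmod_ge_0 z).
  apply Rmult_le_compat_l; auto.
  apply Rinv_le_contravar. nra. nra.
Qed.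

Lemma conv (p : C -> R) (Hp : forall c, (Rabs (p c) <= Cmod c)%R) z :
  ex_series (fun i => p (harm_term z (S i))).
Proof.
  destruct (nfloor_ex (2 * Cmod z)) as [N HN].
  { pose proof (Cmod_ge_0 z). lra. }
  apply (ex_series_incr_n _ N).
  apply (@ex_series_le R_AbsRing R_CompleteNormedModule _ (fun k => 4 * Cmod z * (/ INR (S (N + k)) - / INR (S (S (N + k)))))%R).
  - intro k. change norm with Rabs. eapply Rle_trans. apply Hp.
    rewrite (S_INR (S (N + k))).
    apply harm_bound.
    + rewrite S_INR, plus_INR. pose proof (pos_INR k). lra.
    + rewrite S_INR. pose proof (pos_INR (N+k)). lra.
  - apply (@ex_series_scal_l R_AbsRing R_NormedModule (4 * Cmod z)%R
      (fun k => (/ INR (S (N + k)) - / INR (S (S (N + k))))%R)).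
    apply (ex_series_incr_n (fun i => / INR (S i) - / INR (S (S i)))%R N).
    eexists. apply tele.
Qed.

Lemma shift_comp (p : C -> R) (Hp : forall c, (Rabs (p c) <= Cmod c)%R)
  (Hadd : forall x y, p (x + y) = (p x + p y)%R)
  (Hsub : forall x y, p (x - y) = (p x - p y)%R)
  (Hr : forall r, p (RtoC r) = (r * p 1)%R) z :
  Series (fun i => p (harm_term (z + 1) (S i)))
  = Rplus (Series (fun i => p (harm_term z (S i)))) (p (/ (1 + z))).
Proof.
  rewrite (Series_incr_1 (fun i => p (harm_term z (S i)))) by apply conv, Hp.
  rewrite (Series_ext _ (fun i => p (harm_term z (S (S i))) + p 1 * (/INR (S i) - /INR (S (S i))))%R).
  2:{ intro i. rewrite Rmult_comm, <- Hr, <- Hadd. f_equal.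
      unfold harm_term. pose proof (pos_INR i).
      rewrite (S_INR (S i)), RtoC_minus, RtoC_plus, !RtoC_inv by (rewrite ?S_INR; lra).
      replace (RtoC (INR (S i)) + (z + 1)) with (Cplus (Cplus (RtoC (INR (S i))) (RtoC 1)) z) by ring.
      rewrite RtoC_plus. set (A := Cinv (RtoC (INR (S i)))). set (B := Cinv (Cplus (Cplus (RtoC (INR (S i))) (RtoC 1)) z)). set (D := Cinv (Cplus (RtoC (INR (S i))) (RtoC 1))). ring. }
  rewrite Series_plus.
  2:{ apply (ex_series_incr_1 (fun i => p (harm_term z (S i)))). apply conv, Hp. }
  2:{ apply (@ex_series_scal_l R_AbsRing R_NormedModule (p 1)
      (fun k => (/ INR (S k) - / INR (S (S k)))%R)). eexists. apply tele. }
  rewrite Series_scal_l, (is_series_unique _ _ tele).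
  unfold harm_term. simpl (INR 1).
  rewrite <- RtoC_inv, Rinv_1 by lra.
  rewrite Hsub. lra.
Qed.

Lemma H_shift1 z : H (z + 1) = H z + / (1 + z).
Proof.
  unfold H. apply injective_projections.
  - apply (shift_comp Re re_le_Cmod); intros; try reflexivity.
    unfold Re; simpl; ring.
  - apply (shift_comp Im Im_le_Cmod); intros; try reflexivity.
    unfold Im; simpl; ring.
Qed.

Lemma H_shift z m : H (z + RtoC (INR m)) = H z + sum_n_m (fun i => / (RtoC (INR i) + z)) 1 m.
Proof.
  induction m as [|m IH].
  - rewrite sum_n_m_zero by lia. change (INR 0) with 0%R. rewrite Cplus_0_r.
    change zero with (RtoC 0). rewrite Cplus_0_r. reflexivity.
  - replace (z + RtoC (INR (S m))) with ((z + RtoC (INR m)) + 1)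
      by (rewrite S_INR, RtoC_plus; ring).
    rewrite H_shift1, IH, sum_n_Sm by lia.
    change plus with Cplus.
    rewrite S_INR, RtoC_plus.
    replace (1 + (z + RtoC (INR m))) with (RtoC (INR m) + 1 + z) by ring.
    ring.
Qed.

Lemma H0 : H 0 = 0.
Proof.
  unfold H.
  assert (E : forall i, harm_term 0 (S i) = 0).
  { intro i. unfold harm_term. rewrite Cplus_0_r. ring. }
  rewrite (Series_ext _ (fun _ => 0 * 0)%R) by (intro i; rewrite E; simpl; ring).
  rewrite (Series_ext (fun i => Im _) (fun _ => 0 * 0)%R) by (intro i; rewrite E; simpl; ring).
  rewrite (Series_scal_l 0 (fun _ => 0%R)), Rmult_0_l. reflexivity.
Qed.

Theorem theorem3 (n : nat) (a : nat -> C) (r : C) (hr : ~ neg_int r) :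
  sum_n_m (fun k => sum_n_m (fun j =>
      a (n - j)%nat / (RtoC (INR k) - RtoC (INR j) + r)) 0 (k - 1)) 1 n
  = sum_n_m (fun k => a k * H (RtoC (INR k) + r)) 1 n
    - H r * sum_n_m a 1 n
  /\
  sum_n_m (fun k => sum_n_m (fun j =>
      a (n - j)%nat / (RtoC (INR k) - RtoC (INR j))) 0 (k - 1)) 1 n
  = sum_n_m (fun k => a k * H (RtoC (INR k))) 1 n
  /\
  sum_n_m (fun k => sum_n_m (fun j =>
      a (n - j)%nat / (2 * RtoC (INR k) - 2 * RtoC (INR j) - 1)) 0 (k - 1)) 1 n
  = sum_n_m (fun k => a k * O k) 1 n.
Proof.
  split; [|split].
  - etransitivity.
    { apply (reindex a (fun k j => / (RtoC (INR k) - RtoC (INR j) + r))).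
      intros k j. rewrite !S_INR, !RtoC_plus. f_equal. ring. }
    rewrite (sum_n_m_ext (fun k => a k * H (RtoC (INR k) + r))
       (fun k => plus (mult (a k) (H r)) (a k * sum_n_m (fun i => / (RtoC (INR i) + r)) 1 k))).
    2:{ intro k. rewrite Cplus_comm, H_shift. change plus with Cplus. change mult with Cmult. match goal with |- ?x = ?y => change (@eq C x y) end. change (@sum_n_m (Ring.AbelianMonoid C_Ring)) with (@sum_n_m C_AbelianMonoid). ring. }
    rewrite sum_n_m_plus. pose proof (sum_n_m_mult_r (K:=C_Ring) (H r) a 1 n) as HM. change (@sum_n_m (Ring.AbelianMonoid C_Ring)) with (@sum_n_m C_AbelianMonoid) in HM. rewrite HM.
    change plus with Cplus. change mult with Cmult.
    rewrite (sum_n_m_ext (fun m => a m * sum_n_m (fun k => / (RtoC (INR k) - RtoC (INR 0) + r)) 1 m)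
       (fun k => a k * sum_n_m (fun i => / (RtoC (INR i) + r)) 1 k)).
    2:{ intro k. f_equal. apply sum_n_m_ext. intro i. change (INR 0) with 0%R. f_equal. ring. }
    match goal with |- ?x = ?y => change (@eq C x y) end.
    change (@sum_n_m (Ring.AbelianMonoid C_Ring)) with (@sum_n_m C_AbelianMonoid).
    set (S1 := @sum_n_m C_AbelianMonoid a 1 n). set (S2 := @sum_n_m C_AbelianMonoid (fun k => Cmult (a k) (@sum_n_m C_AbelianMonoid (fun i => Cinv (Cplus (RtoC (INR i)) r)) 1 k)) 1 n). clearbody S1 S2. simpl in S1, S2. ring.
  - etransitivity.
    { apply (reindex a (fun k j => / (RtoC (INR k) - RtoC (INR j)))).
      intros k j. rewrite !S_INR, !RtoC_plus. f_equal. ring. }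
    apply sum_n_m_ext. intro k. f_equal.
    rewrite <- (Cplus_0_l (RtoC (INR k))).
    rewrite H_shift, H0. change (INR 0) with 0%R.
    rewrite Cplus_0_l. apply sum_n_m_ext. intro i. f_equal. ring.
  - etransitivity.
    { apply (reindex a (fun k j => / (2 * RtoC (INR k) - 2 * RtoC (INR j) - 1))).
      intros k j. rewrite !S_INR, !RtoC_plus. f_equal. ring. }
    apply sum_n_m_ext. intro k. f_equal. unfold O.
    apply sum_n_m_ext. intro i. change (INR 0) with 0%R. f_equal.
    rewrite RtoC_minus, RtoC_mult. ring.
Qed.
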